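(* Let $\tau>0$ and let $\tilde N^E_2,\tilde B_2\in\mathbb{C}^{n_2,n_2}$ be commuting matrices with $\tilde N^E_2$ nilpotent. If $\sigma(\tilde N^E_2,I,\tilde B_2)=\{\lambda\in\mathbb{C}:\det(\lambda\tilde N^E_2-I-e^{-\lambda\tau}\tilde B_2)=0\}\subseteq\mathbb{C}_-=\{\lambda:\mathrm{Re}\,\lambda<0\}$, then every eigenvalue of $\tilde B_2$ has modulus strictly less than $1$. Consequently, there exists a norm on $\mathbb{C}^{n_2}$ whose induced matrix norm satisfies $\|\tilde B_2\|<1$. *)

(* Defs.v *)
From mathcomp Require Import all_boot all_order all_algebra.
From mathcomp Require Import all_classical all_reals all_analysis.
From mathcomp.real_closed Require Import complex.

Set Implicit Arguments.
Unset Strict Implicit.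
Unset Printing Implicit Defensive.

Import Order.TTheory GRing.Theory Num.Theory.
Local Open Scope ring_scope.
Local Open Scope complex_scope.

Definition cexp (R : realType) (z : R[i]) : R[i] :=
  (expR (complex.Re z) * cos (complex.Im z)) +i* (expR (complex.Re z) * sin (complex.Im z)).

Definition delay_spectrum (R : realType) (n : nat) (tau : R)
    (N B : 'M[R[i]]_n) : set R[i] :=
  [set l | \det (l *: N - 1%:M - cexp (- (l * tau%:C)) *: B) = 0].

Definition Cminus (R : realType) : set R[i] := [set l | complex.Re l < 0].

Definition nilpotent_mx (F : pzRingType) (n : nat) (A : 'M[F]_n) : Prop :=
  exists k : nat, A ^+ k = 0.

Definition is_vec_norm (R : realType) (n : nat) (nu : 'cV[R[i]]_n -> R) : Prop :=
  [/\ forall x, 0 <= nu x,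
      forall x, nu x = 0 -> x = 0,
      forall (a : R[i]) x, nu (a *: x) = ComplexField.Normc.normc a * nu x
    & forall x y, nu (x + y) <= nu x + nu y].

Definition induced_norm (R : realType) (n : nat) (nu : 'cV[R[i]]_n -> R)
    (A : 'M[R[i]]_n) : R :=
  sup [set nu (A *m x) / nu x | x in [set x : 'cV[R[i]]_n | x != 0]].

(* Main.v *)
Require Import Defs.
From mathcomp Require Import all_boot all_order all_algebra.
From mathcomp Require Import all_classical all_reals all_analysis.
From mathcomp.real_closed Require Import complex.
From mathcomp Require Import mxred spectral.
From mathcomp Require Import ring lra.

Import Order.TTheory GRing.Theory Num.Theory.
Local Open Scope ring_scope.
Local Open Scope classical_set_scope.
Section Aux.
Variable R : realType.
Lemma angle (x y : R) : x^+2 + y^+2 = 1 -> exists t, cos t = x /\ sin t = y.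
Proof.
move=> h.
have hx : -1 <= x <= 1 by apply/andP; split; nra.
have [_ c] := acos_def hx.
have s := sin_acos hx.
have e : 1 - x^+2 = y^+2 by lra.
rewrite e sqrtr_sqr in s.
case: (leP 0 y) => hy.
  by exists (acos x); rewrite c s ger0_norm.
exists (- acos x); rewrite cosN sinN c s ltr0_norm ?opprK //.
Qed.

Local Open Scope complex_scope.
Lemma clog (z : R[i]) : z != 0 -> exists w : R[i],
  cexp w = z /\ complex.Re w = ln (ComplexField.Normc.normc z).
Proof.
case: z => a b nz.
set r := ComplexField.Normc.normc (a +i* b).
have rE : r = Num.sqrt (a^+2 + b^+2) by [].
have r2 : r ^+ 2 = a^+2 + b^+2 by rewrite rE sqr_sqrtr // addr_ge0 // sqr_ge0.
have r0 : r != 0.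
  apply/eqP => /ComplexField.Normc.eq0_normc h; by rewrite h eqxx in nz.
have rp : 0 < r by rewrite lt_neqAle eq_sym r0 rE sqrtr_ge0.
have [t [ct st]] : exists t, cos t = a / r /\ sin t = b / r.
  apply: angle. rewrite !expr_div_n -mulrDl -r2 divff //.
  by rewrite expf_neq0.
exists (ln r +i* t); split => //.
rewrite /cexp /= lnK ?posrE // ct st.
congr (_ +i* _); field; exact: r0.
Qed.
Local Close Scope complex_scope.
Lemma nil_kernel (n : nat) (N : 'M[R[i]]_n) (v : 'rV_n) k :
  v != 0 -> N ^+ k = 0 -> exists j, v *m N ^+ j != 0 /\ v *m N ^+ j *m N = 0.
Proof.
move=> v0 Nk.
have : v *m N ^+ k = 0 by rewrite Nk mulmx0.
elim: k {Nk} => [|k IH]; first by rewrite expr0 mulmx1 => /eqP; rewrite (negbTE v0).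
case: (eqVneq (v *m N ^+ k) 0) => [/IH //|h] hk.
exists k; split => //.
have e : N ^+ k.+1 = N ^+ k *m N by rewrite exprSr mulmxE.
by rewrite -mulmxA -e.
Qed.

Lemma specA (n : nat) (tau : R) (N B : 'M[R[i]]_n) : 0 < tau ->
  N *m B = B *m N -> nilpotent_mx N -> delay_spectrum tau N B `<=` @Cminus R ->
  forall mu, eigenvalue B mu -> ComplexField.Normc.normc mu < 1.
Proof.
move=> tp NB [k Nk] hs mu /eigenvalueP [v vB v0].
rewrite ltNge; apply/negP => hmu.
have [j [wj0 wjN]] := @nil_kernel _ N v k v0 Nk.
set w := v *m N ^+ j in wj0 wjN.
have c : GRing.comm B N by rewrite /GRing.comm -!mulmxE.
have wB : w *m B = mu *: w.
  rewrite /w -mulmxA mulmxE -(commrX j c) -mulmxE mulmxA vB scalemxAl //.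
have mu0 : mu != 0.
  apply/eqP => m0; move: hmu; rewrite m0 ComplexField.Normc.normc0; lra.
have z0 : - mu^-1 != 0 by rewrite oppr_eq0 invr_eq0.
have [w' [ew' rew']] := @clog _ z0.
move: ew' rew'; case: w' => a b ew' rew'.
pose lam : R[i] := Complex (- a / tau) (- b / tau).
have elam : - (lam * tau%:C%C) = Complex a b.
  apply/eqP; rewrite eq_complex /=; apply/andP; split; apply/eqP; field; lra.
have hl : delay_spectrum tau N B lam.
  rewrite /delay_spectrum /= elam ew'; apply/eqP/det0P; exists w => //.
  rewrite !mulmxBr -!scalemxAr mulmx1 wjN wB scaler0 sub0r scalerA mulNr mulVf //.
  by rewrite scaleN1r opprK addNr.
have := hs _ hl; rewrite /Cminus /=; move: rew' => /= ->.
have hz : ComplexField.Normc.normc (- mu^-1) <= 1.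
  rewrite -mulN1r ComplexField.Normc.normcM ComplexField.Normc.normcV.
  have -> : ComplexField.Normc.normc (-1 : R[i]) = 1.
    by rewrite /= sqrrN expr1n oppr0 expr0n addr0 sqrtr1.
  by rewrite mul1r invf_le1 //; lra.
have := ln_le0 hz.
move=> h1 h2; have : 0 <= - ln (ComplexField.Normc.normc (- mu^-1)) / tau.
  by apply: divr_ge0; lra.
lra.
Qed.

Local Notation nc := (@ComplexField.Normc.normc R).

Lemma normc_ge0 (z : R[i]) : 0 <= nc z.
Proof. by case: z => a b; exact: sqrtr_ge0. Qed.

Lemma normc_sum (I : finType) (F : I -> R[i]) : nc (\sum_i F i) <= \sum_i nc (F i).
Proof.
apply: (big_ind2 (fun a b => nc a <= b)).
- by rewrite ComplexField.Normc.normc0.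
- move=> x1 x2 y1 y2 h1 h2; apply: le_trans (le_normcD _ _) _; exact: lerD.
- by [].
Qed.

Lemma specB (n : nat) (B : 'M[R[i]]_n) :
  (forall mu, eigenvalue B mu -> nc mu < 1) ->
  exists nu : 'cV[R[i]]_n -> R, is_vec_norm nu /\ induced_norm nu B < 1.
Proof.
case: n B => [|n] B hB.
  exists (fun _ => 0); split.
    split => //; try (by move=> x _; rewrite flatmx0);
      try (by move=> a x; rewrite mulr0); try (by move=> x y; rewrite addr0).
  rewrite /induced_norm.
  have -> : [set (0:R) / 0 | x in [set x : 'cV[R[i]]_0 | x != 0]] = set0.
    by apply/seteqP; split => y //= [x /= hx _]; rewrite flatmx0 eqxx in hx.
  by rewrite sup0 ltr01.
have [P Pu Ptrig] := Schur B (ltn0Sn n).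
have Pinv : P \in unitmx := unitarymx_unit Pu.
rewrite /similar_to conjumx // in Ptrig.
set T := P *m B *m invmx P in Ptrig.
have TP : T *m P = P *m B by rewrite /T mulmxKV.
have Tz : forall i j : 'I_n.+1, (i < j)%N -> T i j = 0 by apply/is_trig_mxP.
clearbody T.
have diag : forall j, nc (T j j) < 1.
  move=> j; apply: hB; apply/eigenvalueP.
  have : \det (T - (T j j)%:M) == 0.
    rewrite det_trig; last first.
      apply/is_trig_mxP => i k ik; rewrite !mxE (Tz i k ik).
      have /negbTE-> : i != k by apply: contraTneq ik => ->; rewrite ltnn.
      by rewrite mulr0n subr0.
    by rewrite (bigD1 j) //= !mxE eqxx mulr1n subrr mul0r.
  move/det0P => [v v0 vT].
  exists (v *m P).
    rewrite -mulmxA -TP mulmxA.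
    move: vT; rewrite mulmxBr mul_mx_scalar => /eqP; rewrite subr_eq0 => /eqP ->.
    by rewrite scalemxAl.
  by rewrite mulmx_free_eq0 ?row_free_unit.
pose m := \big[Num.max/0]_j nc (T j j).
have m0 : 0 <= m.
  apply: (big_ind (fun x : R => 0 <= x)) => //; last by move=> i _; exact: normc_ge0.
  by move=> x y hx hy; rewrite le_max hx.
have m1 : m < 1.
  apply: (big_ind (fun x : R => x < 1)) => //.
  by move=> x y hx hy; rewrite gt_max hx hy.
have mge : forall j, nc (T j j) <= m.
  by move=> j; rewrite /m (bigD1 j) //= le_max lexx.
pose K := \sum_i \sum_k nc (T i k).
have colK : forall j, \sum_i nc (T i j) <= K.
  move=> j; apply: ler_sum => i _.
  rewrite [X in _ <= X](bigD1 j) //= lerDl.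
  by apply: sumr_ge0 => k _; exact: normc_ge0.
have K0 : 0 <= K by apply: sumr_ge0 => i _; apply: sumr_ge0 => k _; exact: normc_ge0.
pose d := (1 - m) / 2 / (K + 1).
have K1 : K + 1 != 0 by apply: lt0r_neq0; lra.
have dK1 : d * (K + 1) = (1 - m) / 2 by rewrite /d divfK.
have d0 : 0 < d by rewrite /d !divr_gt0 //; lra.
have dK : d * K <= (1 - m) / 2 by move: dK1; rewrite mulrDr mulr1; lra.
have d1 : d <= 1 by move: dK1; nra.
pose q := (1 + m) / 2.
have colb : forall j : 'I_n.+1, \sum_(i < n.+1) d ^+ i * nc (T i j) <= d ^+ j * q.
  move=> j; rewrite (bigD1 j) //=.
  have hS : \sum_(i | i != j) d ^+ i * nc (T i j) <= d ^+ j * (d * K).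
    apply: le_trans (_ : \sum_(i | i != j) d ^+ j * d * nc (T i j) <= _).
      apply: ler_sum => i ij; case: (ltnP i j) => h.
        by rewrite Tz // ComplexField.Normc.normc0 !mulr0.
      apply: ler_wpM2r; first exact: normc_ge0.
      rewrite -exprSr; apply: ler_wiXn2l => //; first exact: ltW.
      by rewrite ltn_neqAle h andbT; rewrite eq_sym.
    rewrite -mulr_sumr -mulrA; apply: ler_wpM2l; first by rewrite exprn_ge0 // ltW.
    apply: ler_wpM2l; first exact: ltW.
    apply: le_trans (colK j).
    rewrite [X in _ <= X](bigD1 j) //= lerDr; exact: normc_ge0.
  have hD : d ^+ j * nc (T j j) <= d ^+ j * m.
    by apply: ler_wpM2l; [rewrite exprn_ge0 // ltW | exact: mge].
  have hq : d ^+ j * (m + d * K) <= d ^+ j * q.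
    by apply: ler_wpM2l; [rewrite exprn_ge0 // ltW | rewrite /q; lra].
  move: hq; rewrite mulrDr; lra.
pose nu := fun x : 'cV[R[i]]_n.+1 => \sum_(i < n.+1) d ^+ i * nc ((P *m x) i 0).
have nu0 : forall x, 0 <= nu x.
  move=> x; apply: sumr_ge0 => i _; apply: mulr_ge0; last exact: normc_ge0.
  by rewrite exprn_ge0 // ltW.
have nuz : forall x, nu x = 0 -> x = 0.
  move=> x hx.
  have y0 : P *m x = 0.
    apply/matrixP => i k; rewrite ord1.
    have hge : forall j : 'I_n.+1, true -> 0 <= d ^+ j * nc ((P *m x) j 0).
      move=> j _; apply: mulr_ge0; last exact: normc_ge0.
      by rewrite exprn_ge0 // ltW.
    have := @psumr_eq0P _ _ _ _ hge hx i isT.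
    have hpos : d ^+ i != 0 by rewrite expf_neq0 // lt0r_neq0.
    move=> /eqP; rewrite mulf_eq0 (negbTE hpos) /= => /eqP.
    by move/ComplexField.Normc.eq0_normc ->; rewrite mxE.
  by rewrite -(mulKmx Pinv x) y0 mulmx0.
have nuZ : forall a x, nu (a *: x) = nc a * nu x.
  move=> a x; rewrite /nu mulr_sumr; apply: eq_bigr => i _.
  by rewrite -scalemxAr mxE ComplexField.Normc.normcM mulrCA.
have nuD : forall x y, nu (x + y) <= nu x + nu y.
  move=> x y; rewrite /nu -big_split /=; apply: ler_sum => i _.
  rewrite mulmxDr mxE -mulrDr; apply: ler_wpM2l; first by rewrite exprn_ge0 // ltW.
  exact: le_normcD.
have nuB : forall x, nu (B *m x) <= q * nu x.
  move=> x.
  have e : P *m (B *m x) = T *m (P *m x) by rewrite !mulmxA TP.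
  rewrite /nu e; set y := P *m x.
  apply: le_trans (_ : \sum_(i < n.+1) d ^+ i * \sum_(k < n.+1) nc (T i k) * nc (y k 0) <= _).
    apply: ler_sum => i _; apply: ler_wpM2l; first by rewrite exprn_ge0 // ltW.
    rewrite mxE; apply: le_trans (normc_sum _ (fun j => T i j * y j 0)) _.
    by apply: ler_sum => k _; rewrite ComplexField.Normc.normcM.
  under eq_bigr do rewrite mulr_sumr.
  rewrite exchange_big /= mulr_sumr; apply: ler_sum => k _.
  have -> : \sum_(i < n.+1) d ^+ i * (nc (T i k) * nc (y k 0)) =
     nc (y k 0) * \sum_(i < n.+1) d ^+ i * nc (T i k).
    by rewrite mulr_sumr; apply: eq_bigr => i _; ring.
  have -> : q * (d ^+ k * nc (y k 0)) = nc (y k 0) * (d ^+ k * q) by ring.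
  by apply: ler_wpM2l; [exact: normc_ge0 | exact: colb].
exists nu; split; first by split.
rewrite /induced_norm.
have ne : [set nu (B *m x) / nu x | x in [set x : 'cV[R[i]]_n.+1 | x != 0]] !=set0.
  exists (nu (B *m const_mx 1) / nu (const_mx 1)); exists (const_mx 1) => //=.
  apply/negP => /eqP/matrixP/(_ ord0 ord0); rewrite !mxE => /eqP.
  by rewrite oner_eq0.
have ub : ubound [set nu (B *m x) / nu x | x in [set x : 'cV[R[i]]_n.+1 | x != 0]] q.
  move=> r [x /= hx <-].
  have px : 0 < nu x.
    rewrite lt_neqAle nu0 andbT eq_sym; apply/negP => /eqP /nuz /eqP.
    by rewrite (negbTE hx).
  by rewrite ler_pdivrMr // mulrC.
apply: le_lt_trans (ge_sup ne ub) _; rewrite /q; lra.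
Qed.
End Aux.

Theorem lemma7 (R : realType) (n2 : nat) (tau : R) (N B : 'M[R[i]]_n2) :
  0 < tau ->
  N *m B = B *m N ->
  nilpotent_mx N ->
  delay_spectrum tau N B `<=` @Cminus R ->
  (forall mu : R[i], eigenvalue B mu -> `|mu| < 1) /\
  (exists nu : 'cV[R[i]]_n2 -> R, is_vec_norm nu /\ induced_norm nu B < 1).
Proof.
move=> tp NB nN hs.
have hA := @specA R _ _ _ _ tp NB nN hs.
split; last exact: (@specB R).
move=> mu /hA h.
have : ((ComplexField.Normc.normc mu)%:C%C < (1 : R)%:C%C) by rewrite ltcR.
exact.
Qed.
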